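(* Let $w_1,\dots,w_l\in\mathbb{C}$, $z_1,\dots,z_l\in\mathbb{T}$ and $R>0$. There exists $b\in\mathbb{C}$ with $|b|\le 2lR$ such that $|w_m+bz_m|\ge R$ for all $m=1,\dots,l$.
   Context: $\mathbb{T}$ denotes the unit circle in $\mathbb{C}$. *)

(* Defs.v *)
From HB Require Import structures.
From mathcomp Require Import all_boot all_order all_algebra.
From mathcomp Require Import complex.

(* Main.v *)
Require Import Defs.
From mathcomp Require Import all_boot all_order all_algebra.
From mathcomp Require Import complex.
From mathcomp Require Import ring lra.
Import Order.TTheory GRing.Theory Num.Theory.
Local Open Scope ring_scope.
Local Open Scope complex_scope.

Theorem lemma4p14 (R : rcfType) (l : nat) (w z : 'I_l -> R[i]) (r : R) :
  (forall m : 'I_l, `|z m| = 1) -> 0 < r ->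
  exists b : R[i], `|b| <= (2 * l%:R * r)%:C /\
    forall m : 'I_l, r%:C <= `|w m + b * z m|.
Proof.
move=> hz hr.
case: l w z hz => [|n] w z hz.
  by exists 0; split; [rewrite normr0 ler0c mulr0n mulr0 mul0r | case].
pose a (m : 'I_n.+1) : R := complex.Re (w m * (z m)^*%C).
pose bad (k : 'I_n.+2) (m : 'I_n.+1) := `|a m + 2 * r * k%:R| < r.
have [k hk] : exists k : 'I_n.+2, forall m, ~~ bad k m.
  suff /existsP [k /forallP hk] : [exists k, [forall m, ~~ bad k m]] by exists k.
  apply: contraT => /existsPn H.
  have H' : forall k, exists m, bad k m.
    move=> k; move: (H k) => /forallPn [m]; rewrite negbK => hm; by exists m.
  pose f k := odflt ord0 [pick m | bad k m].
  have fP k : bad k (f k).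
    rewrite /f; case: pickP => [m //|] /= h.
    by case: (H' k) => m; rewrite h.
  have finj : injective f.
    move=> k1 k2 e.
    have h1 := fP k1; have h2 := fP k2; rewrite -e in h2.
    move: h1 h2; rewrite /bad !ltr_norml => /andP[h1 h1'] /andP[h2 h2'].
    apply/eqP; apply/negPn/negP => ne.
    have : (k1 < k2)%N \/ (k2 < k1)%N.
      case: (ltngtP k1 k2) => e'; [by left|by right|].
      by move: ne; rewrite (val_inj e') eqxx.
    case=> lt.
    - have : k1%:R + 1 <= k2%:R :> R by rewrite natr1 ler_nat.
      move=> hk; nra.
    - have : k2%:R + 1 <= k1%:R :> R by rewrite natr1 ler_nat.
      move=> hk; nra.
  by have := leq_card f finj; rewrite !card_ord ltnn.
exists (2 * r * k%:R)%:C; split.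
  rewrite ger0_norm; last by rewrite ler0c; apply: mulr_ge0 => //; lra.
  rewrite lecR -mulrA [r * _]mulrC mulrA ler_wpM2r ?ler_wpM2l //; first lra.
  by rewrite ler_nat -ltnS.
move=> m.
have zz : z m * (z m)^*%C = 1 by rewrite -sqr_normc hz expr1n.
have -> : w m + (2 * r * k%:R)%:C * z m
          = z m * (w m * (z m)^*%C + (2 * r * k%:R)%:C).
  by rewrite mulrDr mulrCA zz mulr1 [z m * _]mulrC.
rewrite normrM hz mul1r.
apply: le_trans (normc_ge_Re _).
rewrite lecR.
have := hk m; rewrite /bad /a -leNgt.
by case: (w m * (z m)^*%C).
Qed.
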